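(* Let $X\in\{0,1\}$ be binary with $\Pr(X=0)>0$ and $\Pr(X=1)>0$, and let $Y_x$ be a real random variable such that for each $x'\in\{0,1\}$ the conditional cdf of $Y_x$ given $X=x'$ is strictly increasing and continuous on its support. Let $\underline{y}_x<\overline{y}_x$ denote the (possibly infinite) endpoints of the support of $Y_x$. Let $\mathcal{T}\subseteq\mathbb{R}$ and suppose $[\underline{y}_x,\overline{y}_x]\setminus\mathcal{T}$ contains a non-degenerate interval. Then there exists a latent propensity score $p:[\underline{y}_x,\overline{y}_x]\to[0,1]$ (i.e., a function such that the joint distribution of $(Y_x,X)$ with the given marginal distribution of $Y_x$ and with $\Pr(X=1\mid Y_x=y_x)=p(y_x)$ has $\Pr(X=1)$ equal to the given value) which is consistent with $\mathcal{T}$-independence of $Y_x$ from $X$, and for which the sets \[ \{y_x\in[\underline{y}_x,\overline{y}_x] : p(y_x)=0\} \quad\text{and}\quad \{y_x\in[\underline{y}_x,\overline{y}_x]: p(y_x)=1\} \] both have positive Lebesgue measure.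
   Context: $Y_x$ is $\mathcal{T}$-independent of $X$ if $F_{Y_x\mid X}(\tau\mid 0)=F_{Y_x\mid X}(\tau\mid 1)$ for all $\tau\in\mathcal{T}$, where $F_{Y_x\mid X}(\cdot\mid x')$ is the conditional cdf of $Y_x$ given $X=x'$. The latent propensity score is $p(y_x)=\Pr(X=1\mid Y_x=y_x)$. *)

(* Defs.v *)
From HB Require Import structures.
From mathcomp Require Import all_boot all_order all_algebra.
From mathcomp Require Import all_classical all_reals all_analysis.
Set Implicit Arguments. Unset Strict Implicit. Unset Printing Implicit Defensive.
Import Order.TTheory GRing.Theory Num.Theory.
Import numFieldNormedType.Exports.
Local Open Scope classical_set_scope.
Local Open Scope ring_scope.

Section Defs.
Context {d : measure_display} {Omega : measurableType d} {R : realType}.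
Variable (P : probability Omega R).

Definition cdf (Y : Omega -> R) (t : R) : R :=
  fine (P [set w | Y w <= t]).

Definition cond_cdf (Y X : Omega -> R) (x' : R) (t : R) : R :=
  fine (P ([set w | Y w <= t] `&` [set w | X w = x'])) /
  fine (P [set w | X w = x']).

Definition cond_supp (Y X : Omega -> R) (x' : R) : set R :=
  [set y : R | forall e : R, 0 < e ->
     (0 < P ([set w | (y - e < Y w < y + e)%R] `&` [set w | X w = x']))%E].

Definition supp_lo (Y : Omega -> R) : \bar R :=
  ereal_inf [set y%:E | y in [set y : R | 0 < cdf Y y]].
Definition supp_hi (Y : Omega -> R) : \bar R :=
  ereal_sup [set y%:E | y in [set y : R | cdf Y y < 1]].

(* conditional cdf of Y given X = x' in the joint distribution of (Y, X)
   determined by the marginal of Y and Pr(X = 1 | Y = y) = p y *)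
Definition latent_cond_cdf (Y : Omega -> R) (p : R -> R) (x' : R) (t : R) : R :=
  if x' == 1 then
    fine (\int[P]_(w in [set w | Y w <= t]) (p (Y w))%:E) /
    fine (\int[P]_w (p (Y w))%:E)
  else
    fine (\int[P]_(w in [set w | Y w <= t]) (1 - p (Y w))%:E) /
    fine (\int[P]_w (1 - p (Y w))%:E).

End Defs.

Definition T_independent {R : realType} (F : R -> R -> R) (T : set R) : Prop :=
  forall t, T t -> F 0 t = F 1 t.

(* Main.v *)
Require Import Defs.
From HB Require Import structures.
From mathcomp Require Import all_boot all_order all_algebra.
From mathcomp Require Import all_classical all_reals all_analysis.
From mathcomp Require Import ring lra measurable_realfun.
Import Order.TTheory GRing.Theory Num.Theory.
Import numFieldNormedType.Exports.
Local Open Scope classical_set_scope.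
Local Open Scope ring_scope.

Lemma indic_itv (R : realType) (i : interval R) (y : R) :
  \1_[set` i] y = (y \in i)%:R :> R.
Proof. by rewrite indicE mem_setE. Qed.

Lemma mpre_itv d (Omega : measurableType d) (R : realType)
  (Y : Omega -> R) (mY : measurable_fun setT Y) (i : interval R) :
  measurable [set w | Y w \in i].
Proof.
have := mY measurableT _ (measurable_itv i); rewrite setTI.
by congr measurable; apply/seteqP; split => w /=; rewrite ?mem_setE.
Qed.

Lemma mpre_oc d (Omega : measurableType d) (R : realType)
  (Y : Omega -> R) (mY : measurable_fun setT Y) (a b : R) :
  measurable [set w | a < Y w <= b].
Proof.
have := @mpre_itv _ _ _ Y mY `]a, b]; congr measurable; apply/seteqP; split => w /=;
  by rewrite in_itv.
Qed.

Lemma mpre_oo d (Omega : measurableType d) (R : realType)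
  (Y : Omega -> R) (mY : measurable_fun setT Y) (a b : R) :
  measurable [set w | a < Y w < b].
Proof.
have := @mpre_itv _ _ _ Y mY `]a, b[; congr measurable; apply/seteqP; split => w /=;
  by rewrite in_itv.
Qed.

Lemma pieceC d (Omega : measurableType d) (R : realType) (P : probability Omega R)
  (f : Omega -> R) (E : set Omega) (mE : measurable E) (k : R) :
  (forall w, E w -> f w = k) ->
  (\int[P]_(w in E) (f w)%:E = (k * fine (P E))%:E)%E.
Proof.
move=> Hf.
rewrite (@eq_integral _ _ _ P E (fun _ => k%:E)); last first.
  by move=> w; rewrite inE => Ew; rewrite Hf.
have := integral_cst P mE k%:E => /= ->.
by rewrite -(fineK (fin_num_measure P E mE)) -EFinM.
Qed.

Lemma disjP T (A B : set T) : (forall w, A w -> B w -> False) -> [disjoint A & B].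
Proof. by move=> H; apply/eqP; rewrite -subset0 => w [] /H. Qed.

Lemma piece_int d (Omega : measurableType d) (R : realType) (P : probability Omega R)
  (Y : Omega -> R) (mY : measurable_fun setT Y)
  (g : R -> R) (mg : measurable_fun setT g) (g0 : forall y, 0 <= g y)
  (a h c b cI cJ cK cO : R) (ah : a < h) (hc : h < c) (cb : c < b)
  (gI : forall y, a < y <= h -> g y = cI) (gJ : forall y, h < y <= c -> g y = cJ)
  (gK : forall y, c < y < b -> g y = cK) (gO : forall y, ~~ (a < y < b) -> g y = cO)
  (D : set Omega) (mD : measurable D) :
  (\int[P]_(w in D) (g (Y w))%:E =
   (cO * fine (P (D `\` [set w | a < Y w < b]))
    + cI * fine (P (D `&` [set w | a < Y w <= h]))
    + cJ * fine (P (D `&` [set w | h < Y w <= c]))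
    + cK * fine (P (D `&` [set w | c < Y w < b])))%:E)%E.
Proof.
set G := [set w | a < Y w < b]; set I := [set w | a < Y w <= h].
set J := [set w | h < Y w <= c]; set K := [set w | c < Y w < b].
have mG : measurable G by exact: mpre_oo.
have mI : measurable I by exact: mpre_oc.
have mJ : measurable J by exact: mpre_oc.
have mK : measurable K by exact: mpre_oo.
have eD : D = (D `\` G) `|` ((D `&` I) `|` ((D `&` J) `|` (D `&` K))).
  apply/seteqP; split => w /=.
    move=> Dw; case: (boolP (a < Y w < b)) => Gw.
      right; case: (lerP (Y w) h) => yh.
        by left; split => //; rewrite /I /=; case/andP: Gw => -> _.
      right; case: (lerP (Y w) c) => yc.
        by left; split => //; rewrite /J /= yh.
      by right; split => //; rewrite /K /= yc; case/andP: Gw.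
    by left; split => //; apply/negP.
  case=> [[]//|[[]//|[[]//|[]//]]].
have mf : measurable_fun [set: Omega] (EFin \o (g \o Y)).
  by apply/measurable_EFinP; exact: measurableT_comp.
have f0 : forall w, (0 <= (g (Y w))%:E)%E by move=> w; rewrite lee_fin.
rewrite {1}eD.
rewrite ge0_integral_setU //; first last.
- apply: disjP => w [Dw Gw]; case=> [[_ /= /andP[h1 h2]]|[[_ /= /andP[h1 h2]]|[_ /= /andP[h1 h2]]]];
    apply: Gw; apply/andP; split; lra.
- exact: measurable_funTS.
- by repeat apply: measurableU; apply: measurableI.
- exact: measurableD.
rewrite ge0_integral_setU //; first last.
- apply: disjP => w [_ /= /andP[h1 h2]]; case=> [[_ /= /andP[h3 h4]]|[_ /= /andP[h3 h4]]]; lra.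
- exact: measurable_funTS.
- by apply: measurableU; apply: measurableI.
- exact: measurableI.
rewrite ge0_integral_setU //; first last.
- apply: disjP => w [_ /= /andP[h1 h2]] [_ /= /andP[h3 h4]]; lra.
- exact: measurable_funTS.
- exact: measurableI.
- exact: measurableI.
rewrite (@pieceC _ _ _ P _ _ (measurableD mD mG) cO); last first.
  by move=> w [_ Gw]; apply: gO; apply/negP.
rewrite (@pieceC _ _ _ P _ _ (measurableI _ _ mD mI) cI); last first.
  by move=> w [_ Iw]; apply: gI.
rewrite (@pieceC _ _ _ P _ _ (measurableI _ _ mD mJ) cJ); last first.
  by move=> w [_ Iw]; apply: gJ.
rewrite (@pieceC _ _ _ P _ _ (measurableI _ _ mD mK) cK); last first.
  by move=> w [_ Iw]; apply: gK.
by rewrite -!EFinD; congr EFin; lra.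
Qed.

Lemma small_c d (Omega : measurableType d) (R : realType) (P : probability Omega R)
  (Y : Omega -> R) (mY : measurable_fun setT Y) (a b eps : R) (ab : a < b) (e0 : 0 < eps) :
  exists c, a < c < b /\ fine (P [set w | a < Y w <= c]) < eps.
Proof.
pose cn (n : nat) := a + (b - a) / n.+2%:R.
pose F n := [set w | a < Y w <= cn n].
have mF n : measurable (F n) by exact: mpre_oc.
have F0 : \bigcap_n F n = set0.
  apply/seteqP; split => w // Hw.
  have [/andP[h1 _]] : F 0%N w by exact: Hw.
  set e := Y w - a.
  have e0' : 0 < e by rewrite subr_gt0.
  have /andP[_ h2] : F (Num.Def.archi_bound ((b - a) / e)) w by exact: Hw.
  have := @archi_boundP _ ((b - a) / e).
  set n := Num.Def.archi_bound _.
  move: h2; rewrite /cn -addn2 natrD.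
  have n0 : 0 <= n%:R :> R by [].
  have ba : 0 <= b - a by rewrite subr_ge0 ltW.
  move=> h2 H; have {}H := H (divr_ge0 ba (ltW e0')).
  rewrite ltr_pdivrMr // in H.
  have n2 : 0 < n%:R + 2%:R :> R by lra.
  have : e <= (b - a) / (n%:R + 2%:R) by rewrite /e lerBlDl.
  rewrite ler_pdivlMr // => H2.
  nra.
have hF : nonincreasing_seq F.
  move=> n m nm; rewrite subsetEset => w; rewrite /F /= => /andP[h1 h2]; rewrite h1 /=.
  apply: (le_trans h2); rewrite /cn lerD2l.
  have ba : 0 <= b - a by rewrite subr_ge0 ltW.
  apply: ler_wpM2l => //.
  by rewrite lef_pV2 ?posrE ?ltr0Sn // ler_nat.
have := @nonincreasing_cvg_mu _ _ _ P F _ mF _ hF.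
rewrite F0 measure0 => /(_ _ _)/fine_cvgP[].
- by rewrite ltey_eq fin_num_measure.
- exact: measurable0.
move=> _ Hc.
have [N _ HN] := cvgr_lt 0 Hc _ e0.
exists (cn N); split; last exact: (HN N (leqnn N)).
have ba : 0 < b - a by rewrite subr_gt0.
have N2 : 1 < N.+2%:R :> R by rewrite ltr1n.
have Hp : 0 < (b - a) / N.+2%:R by rewrite divr_gt0 // (lt_trans ltr01 N2).
apply/andP; split; first by rewrite /cn ltrDl.
rewrite /cn -ltrBrDl ltr_pdivrMr ?(lt_trans ltr01 N2) //.
nra.
Qed.

Lemma mpre_le d (Omega : measurableType d) (R : realType)
  (Y : Omega -> R) (mY : measurable_fun setT Y) (t : R) :
  measurable [set w | Y w <= t].
Proof.
have := @mpre_itv _ _ _ Y mY `]-oo, t]; congr measurable; apply/seteqP; split => w /=;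
  by rewrite in_itv.
Qed.


Lemma sub_oc_oo (R : realType) (T : Type) (Y : T -> R) (a b u v : R) :
  a <= u -> v < b -> [set w | u < Y w <= v] `<=` [set w | a < Y w < b].
Proof. move=> au vb w /= /andP[h1 h2]; apply/andP; split; [exact: le_lt_trans h1|exact: le_lt_trans vb]. Qed.

Lemma sub_oo_oo (R : realType) (T : Type) (Y : T -> R) (a b u v : R) :
  a <= u -> v <= b -> [set w | u < Y w < v] `<=` [set w | a < Y w < b].
Proof. move=> au vb w /= /andP[h1 h2]; apply/andP; split; [exact: le_lt_trans h1|exact: lt_le_trans vb]. Qed.

Ltac bfalse := apply/negbTE/negP => /andP[? ?]; lra.
Ltac btrue := apply/andP; split; lra.


Definition pfun (R : realType) (a h c b pi q : R) (y : R) : R :=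
  pi + (1 - pi) * \1_[set` `]a, h]] y - pi * \1_[set` `]h, c]] y
   + (q - pi) * \1_[set` `]c, b[] y.
Arguments pfun {R}.

Section pfun_props.
Variables (R : realType) (a h c b pi q : R).
Hypotheses (ah : a < h) (hc : h < c) (cb : c < b) (pi0 : 0 < pi) (pi1 : pi < 1)
  (q01 : 0 <= q <= 1).
Let p := pfun a h c b pi q.
Lemma pI y : a < y <= h -> p y = 1.
Proof.
have ah' := ah; have hc' := hc; have cb' := cb; have pi0' := pi0; have pi1' := pi1; have q01' := q01.
move=> /andP[y1 y2]; rewrite /p /pfun !indic_itv !in_itv /=.
rewrite (_ : (a < y <= h) = true); last by btrue.
rewrite (_ : (h < y <= c) = false); last by bfalse.
rewrite (_ : (c < y < b) = false); last by bfalse.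
rewrite /= ?mulr1n ?mulr0n; lra.
Qed.
Lemma pJ y : h < y <= c -> p y = 0.
Proof.
have ah' := ah; have hc' := hc; have cb' := cb; have pi0' := pi0; have pi1' := pi1; have q01' := q01.
move=> /andP[y1 y2]; rewrite /p /pfun !indic_itv !in_itv /=.
rewrite (_ : (a < y <= h) = false); last by bfalse.
rewrite (_ : (h < y <= c) = true); last by btrue.
rewrite (_ : (c < y < b) = false); last by bfalse.
rewrite /= ?mulr1n ?mulr0n; lra.
Qed.
Lemma pK y : c < y < b -> p y = q.
Proof.
have ah' := ah; have hc' := hc; have cb' := cb; have pi0' := pi0; have pi1' := pi1; have q01' := q01.
move=> /andP[y1 y2]; rewrite /p /pfun !indic_itv !in_itv /=.
rewrite (_ : (a < y <= h) = false); last by bfalse.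
rewrite (_ : (h < y <= c) = false); last by bfalse.
rewrite (_ : (c < y < b) = true); last by btrue.
rewrite /= ?mulr1n ?mulr0n; lra.
Qed.
Lemma pO y : ~~ (a < y < b) -> p y = pi.
Proof.
have ah' := ah; have hc' := hc; have cb' := cb; have pi0' := pi0; have pi1' := pi1; have q01' := q01.
move=> Hy; have Hy' : y <= a \/ b <= y.
  case: (lerP y a) => ya; first by left.
  right; case: (lerP b y) => // yb.
  by move: Hy; rewrite ya yb.
rewrite /p /pfun !indic_itv !in_itv /=.
case: Hy' => Hy'.
  rewrite (_ : (a < y <= h) = false); last by bfalse.
  rewrite (_ : (h < y <= c) = false); last by bfalse.
  rewrite (_ : (c < y < b) = false); last by bfalse.
  rewrite /= ?mulr1n ?mulr0n; lra.
rewrite (_ : (a < y <= h) = false); last by bfalse.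
rewrite (_ : (h < y <= c) = false); last by bfalse.
rewrite (_ : (c < y < b) = false); last by bfalse.
rewrite /= ?mulr1n ?mulr0n; lra.
Qed.
Lemma pB y : 0 <= p y <= 1.
Proof.
have ah' := ah; have hc' := hc; have cb' := cb; have pi0' := pi0; have pi1' := pi1; have q01' := q01.
case: (boolP (a < y < b)) => Hy; last by rewrite pO //; apply/andP; split; lra.
case/andP: Hy => y1 y2.
case: (lerP y h) => y3; first by rewrite pI ?lexx ?ler01 //; btrue.
case: (lerP y c) => y4; first by rewrite pJ ?lexx ?ler01 //; btrue.
by rewrite pK //; btrue.
Qed.
Lemma mp : measurable_fun setT p.
Proof.
have ah' := ah; have hc' := hc; have cb' := cb; have pi0' := pi0; have pi1' := pi1; have q01' := q01.
apply: measurable_funD; [apply: measurable_funB; [apply: measurable_funD|]|];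
  try exact: measurable_cst;
  apply: measurable_funM; try exact: measurable_cst;
  apply: measurable_indic; exact: measurable_itv.
Qed.
End pfun_props.

Theorem corollary3 (d : measure_display) (Omega : measurableType d)
  (R : realType) (P : probability Omega R)
  (Y X : Omega -> R) (T : set R)
  (mY : measurable_fun setT Y) (mX : measurable_fun setT X)
  (Xbin : forall w, X w = 0 \/ X w = 1)
  (PX0 : (0 < P [set w | X w = 0%R])%E) (PX1 : (0 < P [set w | X w = 1%R])%E)
  (Fincr : forall x', x' = 0 \/ x' = 1 ->
     forall y y', cond_supp P Y X x' y -> cond_supp P Y X x' y' -> y < y' ->
       cond_cdf P Y X x' y < cond_cdf P Y X x' y')
  (Fcont : forall x', x' = 0 \/ x' = 1 ->
     forall y, cond_supp P Y X x' y ->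
       cond_cdf P Y X x' z @[z --> y] --> cond_cdf P Y X x' y)
  (lohi : (supp_lo P Y < supp_hi P Y)%E)
  (gapT : exists a b : R, a < b /\
     forall y, a < y < b ->
       (supp_lo P Y <= y%:E <= supp_hi P Y)%E /\ ~ T y) :
  exists p : R -> R,
    [/\ measurable_fun setT p,
        (forall y, 0 <= p y <= 1),
        (\int[P]_w (p (Y w))%:E = P [set w | X w = 1%R])%E,
        T_independent (latent_cond_cdf P Y p) T
      & (0 < lebesgue_measure
               [set y : R | (supp_lo P Y <= y%:E <= supp_hi P Y)%E /\ p y = 0%R])%E
        /\ (0 < lebesgue_measure
               [set y : R | (supp_lo P Y <= y%:E <= supp_hi P Y)%E /\ p y = 1%R])%E].
Proof.
have [a [b [ab gap]]] := gapT.
have mX1 : measurable [set w | X w = 1%R].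
  by have := mX measurableT _ (measurable_set1 1%R); rewrite setTI.
have mX0 : measurable [set w | X w = 0%R].
  by have := mX measurableT _ (measurable_set1 0%R); rewrite setTI.
have hsum : (P [set w | X w = 0%R] + P [set w | X w = 1%R] = 1)%E.
  rewrite -(probability_setT P) -measureU //.
    congr (P _); apply/seteqP; split => w // _.
    by rewrite /setU /=; case: (Xbin w) => ->; [left|right].
  apply/seteqP; split => w // [/= h0 h1].
  by move: (@oner_neq0 R); rewrite -h1 h0 eqxx.
set pi := fine (P [set w | X w = 1%R]).
set pi0 := fine (P [set w | X w = 0%R]).
have E1 : P [set w | X w = 1%R] = pi%:E by rewrite fineK // fin_num_measure.
have E0 : P [set w | X w = 0%R] = pi0%:E by rewrite fineK // fin_num_measure.
have pi_gt0 : 0 < pi by rewrite -lte_fin -E1.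
have pi0_gt0 : 0 < pi0 by rewrite -lte_fin -E0.
have pisum : pi0 + pi = 1.
  by move: hsum; rewrite E0 E1 -EFinD => -[].
clear PX0 PX1 lohi Fincr Fcont gapT hsum.
set G := [set w | a < Y w < b].
have mG : measurable G by exact: mpre_oo.
set m := fine (P G).
have m0 : 0 <= m by apply: fine_ge0; exact: measure_ge0.
have [c [/andP[ac cb] Hc]] : exists c, a < c < b /\ fine (P [set w | a < Y w <= c]) <= pi * (1 - pi) * m.
  have [mpos|] := ltP 0 m.
    have [c [hc Hc]] := @small_c _ _ _ P Y mY a b (pi * (1 - pi) * m) ab
      ltac:(apply: mulr_gt0 => //; apply: mulr_gt0 => //; lra).
    by exists c; split => //; exact: ltW.
  move=> mle; have {mle} m00 : m = 0 by apply/eqP; rewrite eq_le mle m0.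
  exists ((a + b) / 2); split; first by apply/andP; split; lra.
  rewrite m00 mulr0; have <- : fine (P G) = 0 by [].
  apply: fine_le; rewrite ?fin_num_measure //; first exact: mpre_oc.
  apply: le_measure; rewrite ?inE //; first exact: mpre_oc.
  by move=> w /= /andP[h1 h2]; rewrite /G /= h1 /=; lra.
set h := (a + c) / 2.
have ah : a < h by rewrite /h; lra.
have hc : h < c by rewrite /h; lra.
set I := [set w | a < Y w <= h]; set J := [set w | h < Y w <= c].
set K := [set w | c < Y w < b].
have mI : measurable I by exact: mpre_oc.
have mJ : measurable J by exact: mpre_oc.
have mK : measurable K by exact: mpre_oo.
set mi := fine (P I); set mj := fine (P J); set mk := fine (P K).
have mi0 : 0 <= mi by apply: fine_ge0; exact: measure_ge0.
have mj0 : 0 <= mj by apply: fine_ge0; exact: measure_ge0.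
have mk0 : 0 <= mk by apply: fine_ge0; exact: measure_ge0.
have Hij : fine (P [set w | a < Y w <= c]) = mi + mj.
  rewrite (_ : [set w | a < Y w <= c] = I `|` J); last first.
    apply/seteqP; split => w /=.
      move=> /andP[h1 h2]; case: (lerP (Y w) h) => h3; [left|right]; rewrite /I /J /=.
        by rewrite h1 h3.
      by rewrite h3 h2.
    by rewrite /I /J /setU /= => -[/andP[h1 h2]|/andP[h1 h2]]; apply/andP; split; lra.
  rewrite measureU //; last first.
    by apply/seteqP; split => w // [/andP[h1 h2] /andP[h3 h4]]; lra.
  by rewrite fineD ?fin_num_measure.
have one_m : measurable_fun setT (fun _ : R => 1 : R) by exact: measurable_cst.
have Hm : m = mi + mj + mk.
  have := @piece_int _ _ _ P Y mY (fun _ => 1) one_m (fun _ => ler01)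
     a h c b 1 1 1 1 ah hc cb (fun _ _ => erefl) (fun _ _ => erefl)
     (fun _ _ => erefl) (fun _ _ => erefl) G mG.
  rewrite (@pieceC _ _ _ P (fun _ => 1) G mG 1) // setDv measure0 /=.
  rewrite setIidr; last by move=> w /= /andP[h1 h2]; apply/andP; split; lra.
  rewrite setIidr; last by move=> w /= /andP[h1 h2]; apply/andP; split; lra.
  rewrite setIidr; last by move=> w /= /andP[h1 h2]; apply/andP; split; lra.
  by move=> [] Hx; rewrite /m /mi /mj /mk; lra.
have Hij' : mi + mj <= pi * (1 - pi) * m by rewrite -Hij.
have pi1 : pi < 1 by lra.
set q := if mk == 0 then 0 else (pi * m - mi) / mk.
have KEY : mi + q * mk = pi * m.
  rewrite /q; case: eqP => [mk00|/eqP mkn0].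
    rewrite mk00 in Hm *; rewrite mulr0 addr0.
    have Hle : m <= pi * (1 - pi) * m by lra.
    have k1 : pi * (1 - pi) < 1 by nra.
    have m00 : m = 0.
      apply/eqP; rewrite eq_le m0 andbT.
      have : m * (1 - pi * (1 - pi)) <= 0 by nra.
      by rewrite pmulr_lle0 // subr_gt0.
    rewrite m00 mulr0; rewrite m00 in Hm; lra.
  by field.
have q01 : 0 <= q <= 1.
  rewrite /q; case: eqP => [_|/eqP mkn0]; first by rewrite lexx ler01.
  have mkp : 0 < mk by rewrite lt_neqAle eq_sym mkn0 mk0.
  apply/andP; split.
    by apply: divr_ge0 => //; nra.
  by rewrite ler_pdivrMr // mul1r; nra.
pose p := pfun a h c b pi q.
have pI := @pI R a h c b pi q ah hc cb pi_gt0 pi1 q01.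
have pJ := @pJ R a h c b pi q ah hc cb pi_gt0 pi1 q01.
have pK := @pK R a h c b pi q ah hc cb pi_gt0 pi1 q01.
have pO := @pO R a h c b pi q ah hc cb pi_gt0 pi1 q01.
have pB := @pB R a h c b pi q ah hc cb pi_gt0 pi1 q01.
have mp := @mp R a h c b pi q ah hc cb pi_gt0 pi1 q01.
have p0 y : 0 <= p y by case/andP: (pB y).
have mp1 : measurable_fun setT (fun y => 1 - p y).
  by apply: measurable_funB => //; exact: measurable_cst.
have p10 y : 0 <= 1 - p y by case/andP: (pB y) => _; rewrite subr_ge0.
have intp D : measurable D -> G `<=` D \/ D `&` G = set0 ->
    (\int[P]_(w in D) (p (Y w))%:E = (pi * fine (P D))%:E)%E /\
    (\int[P]_(w in D) (1 - p (Y w))%:E = ((1 - pi) * fine (P D))%:E)%E.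
  move=> mD HD.
  have e1 := @piece_int _ _ _ P Y mY p mp p0 a h c b 1 0 q pi ah hc cb pI pJ pK pO D mD.
  have e2 := @piece_int _ _ _ P Y mY (fun y => 1 - p y) mp1 p10 a h c b 0 1 (1 - q) (1 - pi)
    ah hc cb (fun y H => ltac:(by rewrite /= /p pI // subrr)) (fun y H => ltac:(by rewrite /= /p pJ // subr0))
    (fun y H => ltac:(by rewrite /= /p pK)) (fun y H => ltac:(by rewrite /= /p pO)) D mD.
  have e3 := @piece_int _ _ _ P Y mY (fun _ => 1) one_m (fun _ => ler01)
     a h c b 1 1 1 1 ah hc cb (fun _ _ => erefl) (fun _ _ => erefl)
     (fun _ _ => erefl) (fun _ _ => erefl) D mD.
  rewrite (@pieceC _ _ _ P (fun _ => 1) D mD 1) // in e3.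
  case: e3 => e3.
  rewrite e1 e2; move: e3.
  rewrite -/G -/I -/J -/K.
  case: HD => HD.
    rewrite (setIidr (subset_trans (@sub_oc_oo _ _ Y a b a h (lexx a) (lt_trans hc cb)) HD)).
    rewrite (setIidr (subset_trans (@sub_oc_oo _ _ Y a b h c (ltW ah) cb) HD)).
    rewrite (setIidr (subset_trans (@sub_oo_oo _ _ Y a b c b (ltW (lt_trans ah hc)) (lexx b)) HD)).
    rewrite -/mi -/mj -/mk => e3.
    by split; congr EFin; nra.
  have E0' (Z : set Omega) : Z `<=` G -> D `&` Z = set0.
    move=> ZG; apply/seteqP; split => w // [Dw Zw].
    by rewrite -HD; split => //; exact: ZG.
  rewrite (E0' _ (@sub_oc_oo _ _ Y a b a h (lexx a) (lt_trans hc cb))) (E0' _ (@sub_oc_oo _ _ Y a b h c (ltW ah) cb)) (E0' _ (@sub_oo_oo _ _ Y a b c b (ltW (lt_trans ah hc)) (lexx b))).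
  rewrite (_ : D `\` G = D); last first.
    apply/seteqP; split => w; first by case.
    by move=> Dw; split => // Gw; rewrite -[False]/(set0 w) -HD.
  rewrite !measure0 /= => e3.
  by split; congr EFin; lra.
have [eT1 eT2] := intp setT measurableT (or_introl (@subsetT _ G)).
rewrite probability_setT /= mulr1 in eT1 eT2.
exists p; split => //.
- by rewrite E1.
- move=> t Tt; rewrite /latent_cond_cdf.
  rewrite (_ : ((0 : R) == 1) = false); last by rewrite eq_sym oner_eq0.
  rewrite eqxx eT1 eT2 /=.
  have mD := @mpre_le _ _ _ Y mY t.
  have HD : G `<=` [set w | Y w <= t] \/ [set w | Y w <= t] `&` G = set0.
    case: (lerP t a) => ta.
      right; apply/seteqP; split => w // [/= h1 /andP[h2 h3]]; lra.
    left => w /= /andP[h1 h2].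
    case: (lerP b t) => bt; first lra.
    by exfalso; apply: (gap t _).2 Tt; apply/andP; split.
  have [i1 i2] := intp _ mD HD.
  rewrite i1 i2 /=.
  have pi1' : 1 - pi != 0 by rewrite subr_eq0; apply/eqP; lra.
  have pi0' : pi != 0 by apply/eqP; lra.
  by rewrite ?mulr1; field; rewrite pi0' pi1'.
- split.
  + apply: (lt_le_trans _ (@le_outer_measure _ _ lebesgue_measure [set` `]h, c]] _ _)).
      have Hl := @lebesgue_measure_itv R `]h, c]; rewrite /= lte_fin hc -EFinB in Hl.
      apply: (@lt_le_trans _ _ ((c - h)%:E)); first by rewrite lte_fin subr_gt0.
      by rewrite -Hl; exact: lexx.
    move=> y /=; rewrite in_itv /= => /andP[y1 y2]; split.
      by apply: (gap y _).1; apply/andP; split; lra.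
    by apply: pJ; apply/andP; split.
  + apply: (lt_le_trans _ (@le_outer_measure _ _ lebesgue_measure [set` `]a, h]] _ _)).
      have Hl := @lebesgue_measure_itv R `]a, h]; rewrite /= lte_fin ah -EFinB in Hl.
      apply: (@lt_le_trans _ _ ((h - a)%:E)); first by rewrite lte_fin subr_gt0.
      by rewrite -Hl; exact: lexx.
    move=> y /=; rewrite in_itv /= => /andP[y1 y2]; split.
      by apply: (gap y _).1; apply/andP; split; lra.
    by apply: pI; apply/andP; split.
Qed.
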